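(* For $j=0,\dots,n$, $$\varphi(y_j)=\sum_{i=0}^{\min(j,n-j)}2^{2i}\binom{n-2i}{j-i}\,p_i.$$
   Context: $B_n$: signed permutations $w=w_1\dots w_n$, values ordered $\cdots<-2<-1<1<2<\cdots$, $w_0=0$; $\mathrm{Des}(w)=\{i\in\{0,\dots,n-1\}:w_i>w_{i+1}\}$. $y_j=\sum_{w\in B_n,\ \#\mathrm{Des}(w)=j}w$. $\varphi$: linear extension of $w\mapsto|w_1|\dots|w_n|$ from $\mathbb{Q}B_n$ to $\mathbb{Q}\mathfrak{S}_n$. For $u\in\mathfrak{S}_n$, $\mathrm{Peak}(u)=\{i\in[n-1]:u_{i-1}<u_i>u_{i+1}\}$ with $u_0=0$, and $p_i=\sum_{u\in\mathfrak{S}_n,\ \#\mathrm{Peak}(u)=i}u$ for $0\le i\le\lfloor n/2\rfloor$. *)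

(* Defs.v *)
From mathcomp Require Import all_boot all_order all_algebra all_fingroup.
Set Implicit Arguments. Unset Strict Implicit. Unset Printing Implicit Defensive.
Import GRing.Theory Num.Theory.
Local Open Scope ring_scope.

(* Signed permutations of [n]: a permutation s of 'I_n together with a sign
   vector e; the one-line word is w_k = (if e (k-1) then -1 else 1) * (s (k-1) + 1)
   for k = 1..n (values in {+-1,...,+-n}), with w_0 = 0. *)
Definition signed_perm (n : nat) := ('S_n * {ffun 'I_n -> bool})%type.

Definition bval n (w : signed_perm n) (k : nat) : int :=
  match k with
  | 0 => 0
  | k'.+1 =>
      if insub k' is Some i then
        (if w.2 i then - ((w.1 i).+1%:Z) else (w.1 i).+1%:Z)
      else 0
  end.

Definition ndes n (w : signed_perm n) : nat :=
  #|[set i : 'I_n | bval w (i.+1) < bval w i]|.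

Definition pval n (u : 'S_n) (k : nat) : nat :=
  match k with
  | 0 => 0%N
  | k'.+1 => if insub k' is Some i then (u i).+1 else 0%N
  end.

Definition npeak n (u : 'S_n) : nat :=
  #|[set i : 'I_n | (0 < i)%N && (pval u (i.-1) < pval u i)%N
                     && (pval u (i.+1) < pval u i)%N]|.

(* Elements of the group algebras QB_n and QS_n, as coefficient vectors. *)
Notation QB n := {ffun signed_perm n -> rat}.
Notation QS n := {ffun 'S_n -> rat}.

Definition y n (j : nat) : QB n := [ffun w => ((ndes w == j) : nat)%:R].

Definition p n (i : nat) : QS n := [ffun u => ((npeak u == i) : nat)%:R].

(* phi: linear extension of w |-> |w_1| ... |w_n| (i.e. w |-> w.1) *)
Definition phi n (x : QB n) : QS n :=
  [ffun u => \sum_(w : signed_perm n | w.1 == u) x w].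

(* Main.v *)
Require Import Defs.
From mathcomp Require Import all_boot all_order all_algebra all_fingroup.
From mathcomp Require Import zify ring.
Import GRing.Theory Num.Theory.
Local Open Scope ring_scope.

Lemma peak_valley (a : nat -> nat) m :
  (forall k, (k <= m)%N -> a k != a k.+1) -> a 0%N = 0%N ->
  (\sum_(0 <= k < m) ((a k < a k.+1) && (a k.+2 < a k.+1)) =
   \sum_(0 <= k < m) ((a k.+1 < a k) && (a k.+1 < a k.+2)) + (a m.+1 < a m))%N.
Proof.
move=> hd h0; elim: m hd => [|m IH] hd.
  by rewrite !big_nat h0 !big_nil.
rewrite !big_nat_recr //= IH; last by move=> k hk; apply: hd; lia.
have h1 := hd m (leqnSn m); have h2 := hd m.+1 (leqnn _).
move: h1 h2; case: (ltngtP (a m) (a m.+1)) => // H1 _;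
  case: (ltngtP (a m.+1) (a m.+2)) => // H2 _ /=; rewrite ?H1 ?H2 /=; lia.
Qed.

Lemma coef_1X m k : (((1 + 'X : {poly rat}) ^+ m)`_k = 'C(m, k)%:R).
Proof.
rewrite exprDn coef_sum.
under eq_bigr => i _ do rewrite expr1n mul1r coefMn coefXn.
case: (ltnP k m.+1) => hk.
  rewrite (bigD1 (Ordinal hk)) //= eqxx big1 ?addr0 //.
  move=> i /eqP hi; rewrite (_ : (k == i) = false) ?mul0rn //.
  by apply/negbTE/eqP => hki; apply: hi; apply: val_inj.
rewrite bin_small // big1 // => i _; rewrite (_ : (k == i) = false) ?mul0rn //.
by apply/negbTE/eqP => hki; move: (ltn_ord i); rewrite -hki; lia.
Qed.

Section U.
Variables (n : nat) (u : 'S_n).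
Definition a k := Defs.pval u k.
Arguments a : simpl never.

Definition sg (e : {ffun 'I_n -> bool}) (k : nat) : bool :=
  if insub k is Some i then e i else false.

Lemma sgE e (i : 'I_n) : sg e i = e i.
Proof. by rewrite /sg valK. Qed.

Lemma bvalE e k : bval (u, e) k.+1 =
  if sg e k then - ((a k.+1)%:Z) else (a k.+1)%:Z.
Proof. by rewrite /bval /a /Defs.pval /sg; case: (insub k) => [i|] //=; case: (e i). Qed.

Lemma a_pos k : (k < n)%N -> (0 < a k.+1)%N.
Proof. by move=> hk; rewrite /a /= insubT. Qed.

Lemma pvalS k (hk : (k < n)%N) : a k.+1 = (u (Ordinal hk)).+1.
Proof.
rewrite /a /= insubT /=; congr (u _).+1; exact: val_inj.
Qed.

Lemma a_adj k : (k < n)%N -> a k != a k.+1.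
Proof.
case: k => [|k] hk; first by rewrite /a /= insubT.
have hk1 : (k < n)%N by lia.
rewrite (pvalS _ hk1) (pvalS _ hk); apply/negP => /eqP [] H; move: (perm_inj (val_inj H)) => /(congr1 val) /=; lia.
Qed.

Lemma desE e (i : nat) : (i < n)%N ->
  (bval (u, e) i.+1 < bval (u, e) i) = if (a i < a i.+1)%N then sg e i else ~~ sg e i.-1.
Proof.
move=> hi; case: i hi => [|k] hk.
  rewrite bvalE /= (_ : (a 0 < a 1)%N = true); last by exact: (a_pos _ hk).
  have := a_pos _ hk; case: (sg e 0) => /= h; apply/idP; lia.
rewrite !bvalE.
have h1 := a_pos _ hk; have h2 : (0 < a k.+1)%N by apply: a_pos; lia.
have h3 := a_adj _ hk.
move: h1 h2 h3; set x := a k.+2; set y := a k.+1; clearbody x y => h1 h2 h3.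
rewrite [k.+1.-1]/=.
case: (sg e k); case: (sg e k.+1) => /=.
- case: ltnP => h; [apply/idP|apply/negbTE/negP]; lia.
- case: ltnP => h; apply/negbTE/negP; lia.
- case: ltnP => h; apply/idP; lia.
- case: ltnP => h; [apply/negbTE/negP|apply/idP]; lia.
Qed.
Definition L k := (a k < a k.+1)%N.
Definition R k := (k.+1 < n)%N && (a k.+2 < a k.+1)%N.
Definition c k (b : bool) := ((L k && b) + (R k && ~~ b))%N.

Lemma card_sum m (P : 'I_m -> bool) : #|[set i | P i]| = (\sum_(i < m) P i)%N.
Proof. by rewrite -sum1dep_card big_mkcond /=; apply: eq_bigr => i _; case: (P i). Qed.

Lemma ndesE e : ndes (u, e) = (\sum_(0 <= k < n) c k (sg e k))%N.
Proof.
rewrite /ndes card_sum -(big_mkord xpredT (fun i : nat => ((bval (u,e) i.+1 < bval (u,e) i)%R : nat))).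
transitivity (\sum_(0<=i<n) ((L i && sg e i) + ((a i.+1 < a i)%N && ~~ sg e i.-1)))%N.
  apply: eq_big_nat => i /andP[_ hi]; rewrite desE //; have := a_adj _ hi.
  by rewrite /L; case: ltngtP => h _ //=; rewrite ?addn0.
rewrite big_split /= [X in _ = X]big_split /=; congr (_ + _)%N.
case: (posnP n) => [n0|npos]; first by rewrite !big_geq // n0.
have a0 : a 0 = 0%N by [].
rewrite big_ltn // a0 ltn0 /= add0n big_add1.
rewrite [in RHS](big_cat_nat _ (n:=n.-1)) ?leq_pred //.
have hn : (n.-1 < n)%N by rewrite prednK.
rewrite (big_ltn (m:=n.-1) (n:=n) hn).
rewrite prednK // (big_geq (m:=n) (n:=n)) // [R n.-1]/R prednK // ltnn /= !addn0.
apply: eq_big_nat => k /andP[_ hk]; rewrite /R (_ : (k.+1 < n)%N) //; lia.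
Qed.
Lemma sum_last m (F : nat -> nat) : (0 < m)%N ->
  (\sum_(0 <= k < m) F k = \sum_(0 <= k < m.-1) F k + F m.-1)%N.
Proof. by case: m => // m _; rewrite big_nat_recr. Qed.

Lemma PKE : (\sum_(0 <= k < n) (L k && R k) =
  \sum_(0 <= k < n.-1) ((a k < a k.+1) && (a k.+2 < a k.+1)))%N.
Proof.
case: (posnP n) => [n0|npos]; first by rewrite !big_geq // n0.
rewrite sum_last // [R n.-1]/R prednK // ltnn /= andbF addn0.
apply: eq_big_nat => k /andP[_ hk]; rewrite /R /L (_ : (k.+1 < n)%N) //; lia.
Qed.

Lemma npeakE : npeak u = (\sum_(0 <= k < n) (L k && R k))%N.
Proof.
rewrite PKE /npeak card_sum.
rewrite -(big_mkord xpredT (fun i : nat => (((0 < i)%N && (a i.-1 < a i)%N && (a i.+1 < a i)%N) : nat))).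
case: (posnP n) => [n0|npos]; first by rewrite !big_geq // n0.
by rewrite big_ltn // big_add1.
Qed.

Lemma valleyE : (\sum_(0 <= k < n) (~~ L k && ~~ R k))%N = npeak u.
Proof.
rewrite npeakE PKE.
case: (posnP n) => [n0|npos]; first by rewrite !big_geq // n0.
rewrite peak_valley; first last.
- by [].
- by move=> k hk; apply: a_adj; lia.
rewrite sum_last // [R n.-1]/R prednK // ltnn /= andbT.
have := a_adj n.-1; rewrite prednK // => /(_ (leqnn _)) hd.
have -> : (~~ L n.-1 : nat) = (a n < a n.-1)%N by rewrite /L prednK //; move: hd; case: ltngtP.
congr (_ + _)%N.
apply: eq_big_nat => k /andP[_ hk].
have h1 := a_adj k; have h2 := a_adj k.+1.
rewrite /R /L (_ : (k.+1 < n)%N) /=; last lia.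
have /h1 {}h1 : (k < n)%N by lia. have /h2 {}h2 : (k.+1 < n)%N by lia.
move: h1 h2; case: ltngtP => //= H1 _; case: ltngtP => //= H2 _.
Qed.
Lemma factorE k : ('X^(c k true) + 'X^(c k false) : {poly rat}) =
  (2%:R * 'X) ^+ (L k && R k) * 2%:R ^+ (~~ L k && ~~ R k) * (1 + 'X) ^+ (L k != R k).
Proof. by rewrite /c; case: (L k); case: (R k) => /=; rewrite ?expr0 ?expr1; ring. Qed.

Lemma polyE : (\sum_(e : {ffun 'I_n -> bool}) 'X^(ndes (u, e)) : {poly rat}) =
  (2%:R * 'X) ^+ npeak u * 2%:R ^+ npeak u * (1 + 'X) ^+ (n - 2 * npeak u).
Proof.
transitivity (\sum_(e : {ffun 'I_n -> bool}) \prod_(k < n) ('X^(c k (e k)) : {poly rat})).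
  apply: eq_bigr => e _; rewrite ndesE big_mkord -prodrXr; apply: eq_bigr => k _.
  by rewrite sgE.
rewrite -(bigA_distr_bigA (fun (k : 'I_n) (b : bool) => ('X^(c k b) : {poly rat}))).
under eq_bigr => k _ do rewrite big_bool /= factorE.
rewrite !big_split /= !prodrXr.
have hT : (\sum_(k < n) (L k && R k) = npeak u)%N by rewrite npeakE big_mkord.
have hF : (\sum_(k < n) (~~ L k && ~~ R k) = npeak u)%N by rewrite -valleyE big_mkord.
have hs : (\sum_(k < n) (L k && R k) + \sum_(k < n) (~~ L k && ~~ R k)
   + \sum_(k < n) (L k != R k) = n)%N.
  rewrite -!big_split /= (eq_bigr (fun _ => 1%N)) ?sum1_card ?card_ord //.
  by move=> k _; case: (L k); case: (R k).
rewrite hT hF in hs *; move: (npeak u) hs => P hs; congr (_ * _ ^+ _); by rewrite -[n in RHS]hs mul2n -addnn addKn.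
Qed.
Lemma peak_le : (2 * npeak u <= n)%N.
Proof.
have hT : (\sum_(k < n) (L k && R k) = npeak u)%N by rewrite npeakE big_mkord.
have hF : (\sum_(k < n) (~~ L k && ~~ R k) = npeak u)%N by rewrite -valleyE big_mkord.
have hs : (\sum_(k < n) (L k && R k) + \sum_(k < n) (~~ L k && ~~ R k)
   + \sum_(k < n) (L k != R k) = n)%N.
  rewrite -!big_split /= (eq_bigr (fun _ => 1%N)) ?sum1_card ?card_ord //.
  by move=> k _; case: (L k); case: (R k).
rewrite hT hF in hs; move: (npeak u) hs => P hs; lia.
Qed.

Lemma countE j : (\sum_(e : {ffun 'I_n -> bool}) ((ndes (u, e) == j) : nat)%:R : rat) =
  (if (npeak u <= j)%N then (2 ^ (2 * npeak u) * 'C(n - 2 * npeak u, j - npeak u))%N else 0%N)%:R.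
Proof.
have -> : (\sum_(e : {ffun 'I_n -> bool}) ((ndes (u, e) == j) : nat)%:R : rat) =
   (\sum_(e : {ffun 'I_n -> bool}) 'X^(ndes (u, e)) : {poly rat})`_j.
  by rewrite coef_sum; apply: eq_bigr => e _; rewrite coefXn eq_sym.
rewrite polyE; move: (npeak u) => P.
have -> : (2%:R * 'X) ^+ P * 2%:R ^+ P * (1 + 'X) ^+ (n - 2 * P) =
  ((2 ^ (2 * P))%:R)%:P * ('X^P * (1 + 'X : {poly rat}) ^+ (n - 2 * P)).
  by rewrite polyC_natr natrX mul2n -addnn exprD exprMn; ring.
rewrite coefCM coefXnM coef_1X; case: ltnP => h /=; first by rewrite mulr0.
by rewrite -natrM.
Qed.
End U.

Theorem proposition6p2 (n j : nat) : (j <= n)%N ->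
  phi (y n j) =
  \sum_(i < (minn j (n - j)).+1)
     p n i *+ (2 ^ (2 * i) * 'C(n - 2 * i, j - i)).
Proof.
move=> hj; apply/ffunP => u.
rewrite /phi ffunE sum_ffunE.
have -> : \sum_(w : signed_perm n | w.1 == u) y n j w =
    \sum_(e : {ffun 'I_n -> bool}) ((ndes (u, e) == j) : nat)%:R.
  rewrite big_mkcond /=.
  transitivity (\sum_(s : 'S_n) \sum_(e : {ffun 'I_n -> bool})
      (if s == u then y n j (s, e) else 0)).
    by rewrite pair_big /=; apply: eq_big => // -[s e].
  rewrite (bigD1 u) //= [X in _ + X]big1 ?addr0; last first.
    by move=> s /= hs; apply: big1 => e _; rewrite (negbTE hs).
  by apply: eq_bigr => e _; rewrite eqxx ffunE.
rewrite countE.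
under eq_bigr => i _ do rewrite ffunMnE ffunE.
have hle := @peak_le n u.
case: (leqP (npeak u) (minn j (n - j))) => hP.
  have hP' : (npeak u < (minn j (n - j)).+1)%N by [].
  rewrite (bigD1 (Ordinal hP')) //= eqxx big1 ?addr0; last first.
    move=> i /eqP hi; rewrite (_ : (npeak u == i) = false) ?mul0rn //.
    by apply/negbTE/eqP => hki; apply: hi; apply: val_inj.
  have -> : (npeak u <= j)%N by move: hP; rewrite leq_min => /andP[].
  by [].
rewrite big1; last first.
  move=> i _; rewrite (_ : (npeak u == i) = false) ?mul0rn //.
  by apply/negbTE/eqP => hki; move: (ltn_ord i); rewrite -hki; lia.
case: ifP => // hPj; rewrite bin_small ?muln0 //.
move: hP hPj hle; move: (npeak u) => P; rewrite gtn_min; lia.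
Qed.
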